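(* Let $B$ be any closed Euclidean ball in $\mathbb R^n$, let $S^*$ be a regular simplex inscribed into $B$, and let $P^*:C(B)\to\Pi_1(\mathbb R^n)$ be the interpolation projector with nodes at the vertices of $S^*$. Define $\psi(t)=\frac{2\sqrt n}{n+1}\big(t(n+1-t)\big)^{1/2}+\big|1-\frac{2t}{n+1}\big|$ for $0\le t\le n+1$, and $a=\big\lfloor\frac{n+1}2-\frac{\sqrt{n+1}}2\big\rfloor$. Then $$\|P^*\|_B=\max\{\psi(a),\psi(a+1)\},\qquad \sqrt n\le\|P^*\|_B\le\sqrt{n+1}.$$ Moreover, $\|P^*\|_B=\sqrt n$ only for $n=1$, and $\|P^*\|_B=\sqrt{n+1}$ if and only if $\sqrt{n+1}$ is an integer.
   Context: $C(B)$ is the space of continuous functions on $B$ with sup norm; $\Pi_1(\mathbb R^n)$ is the space of polynomials of degree $\le1$. The interpolation projector with nodes $x^{(1)},\dots,x^{(n+1)}$ (vertices of a nondegenerate simplex) maps $f$ to the unique $p\in\Pi_1(\mathbb R^n)$ with $p(x^{(j)})=f(x^{(j)})$; $\|P\|_B$ is its operator norm. A simplex is inscribed into $B$ if its vertices lie on the boundary sphere of $B$. *)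

(* Defs.v *)
From HB Require Import structures.
From mathcomp Require Import all_boot all_order all_algebra.
From mathcomp Require Import all_classical all_reals all_analysis.
Set Implicit Arguments. Unset Strict Implicit. Unset Printing Implicit Defensive.
Import Order.TTheory GRing.Theory Num.Theory.
Import numFieldNormedType.Exports.
Local Open Scope classical_set_scope.
Local Open Scope ring_scope.

Section Defs.
Variables (R : realType) (n : nat).

Definition enorm (v : 'rV[R]_n) : R := Num.sqrt (\sum_(i < n) v ord0 i ^+ 2).

Definition cball (c : 'rV[R]_n) (r : R) : set 'rV[R]_n :=
  [set x | enorm (x - c) <= r].

Definition supnorm (B : set 'rV[R]_n) (f : 'rV[R]_n -> R) : R :=
  sup [set `|f x| | x in B].

Definition is_affine (p : 'rV[R]_n -> R) : Prop :=
  exists (a : R) (b : 'rV[R]_n), forall x, p x = a + \sum_(i < n) b ord0 i * x ord0 i.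

Definition nondegenerate (x : 'I_n.+1 -> 'rV[R]_n) : Prop :=
  row_free (\matrix_(i < n) (x (lift ord0 i) - x ord0)).

Definition regular_inscribed (c : 'rV[R]_n) (r : R) (x : 'I_n.+1 -> 'rV[R]_n) : Prop :=
  nondegenerate x /\
  (forall j, enorm (x j - c) = r) /\
  exists d : R, 0 < d /\ forall i j, i != j -> enorm (x i - x j) = d.

(* p = P f : the (unique, by nondegeneracy) affine interpolant of f at the nodes x *)
Definition interpolates (x : 'I_n.+1 -> 'rV[R]_n) (f p : 'rV[R]_n -> R) : Prop :=
  is_affine p /\ forall j, p (x j) = f (x j).

(* operator norm ||P||_B of the interpolation projector P : C(B) -> Pi_1 *)
Definition proj_norm (B : set 'rV[R]_n) (x : 'I_n.+1 -> 'rV[R]_n) : R :=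
  sup [set supnorm B p | p in
        [set p | exists f : 'rV[R]_n -> R,
           {within B, continuous f} /\ supnorm B f <= 1 /\ interpolates x f p]].

Definition psi (t : R) : R :=
  (2 * Num.sqrt (n%:R)) / (n.+1%:R) * Num.sqrt (t * (n.+1%:R - t))
  + `|1 - 2 * t / n.+1%:R|.

End Defs.

(* Main.v *)
Require Import Defs.
From HB Require Import structures.
From mathcomp Require Import all_boot all_order all_algebra.
From mathcomp Require Import all_classical all_reals all_analysis.
From mathcomp Require Import ring lra zify.
Require Import Defs.
Import Order.TTheory GRing.Theory Num.Theory.
Import numFieldNormedType.Exports.
Local Open Scope classical_set_scope.
Local Open Scope ring_scope.

Section PartA.
Variables (R : realType) (n : nat).
Hypothesis hn : (1 <= n)%N.

Local Notation m := (n.+1%:R : R).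
Local Notation sn := (Num.sqrt (n%:R : R)).
Local Notation sm := (Num.sqrt (n.+1%:R : R)).

Definition G (d : R) : R := sn * Num.sqrt (m ^+ 2 - d ^+ 2) + d.

Lemma m_ge2 : 2 <= m.
Proof. by rewrite -[2]/(2%:R : R) ler_nat ltnS. Qed.

Lemma sn_ge0 : 0 <= sn. Proof. exact: sqrtr_ge0. Qed.
Lemma sn2 : sn ^+ 2 = n%:R. Proof. by rewrite sqr_sqrtr. Qed.
Lemma sm2 : sm ^+ 2 = m. Proof. by rewrite sqr_sqrtr. Qed.
Lemma mE : m = n%:R + 1. Proof. by rewrite -natr1. Qed.

Lemma sq_s d : 0 <= d <= m -> Num.sqrt (m ^+ 2 - d ^+ 2) ^+ 2 = m ^+ 2 - d ^+ 2.
Proof. move=> /andP[h1 h2]; rewrite sqr_sqrtr //; nra. Qed.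


Lemma sq_cmp (d : R) : (n%:R * d ^+ 2 <= m ^+ 2 - d ^+ 2) = (d ^+ 2 <= m).
Proof.
have m2 := m_ge2.
rewrite -subr_ge0 (_ : m ^+ 2 - d ^+ 2 - n%:R * d ^+ 2 = m * (m - d ^+ 2)); last by rewrite mE; ring.
by rewrite pmulr_rge0 ?subr_ge0 //; lra.
Qed.

Lemma sq_cmp_lt (d : R) : (n%:R * d ^+ 2 < m ^+ 2 - d ^+ 2) = (d ^+ 2 < m).
Proof.
have m2 := m_ge2.
rewrite -subr_gt0 (_ : m ^+ 2 - d ^+ 2 - n%:R * d ^+ 2 = m * (m - d ^+ 2)); last by rewrite mE; ring.
by rewrite pmulr_rgt0 ?subr_gt0 //; lra.
Qed.

Lemma sq_cmp_ge (d : R) : (m ^+ 2 - d ^+ 2 <= n%:R * d ^+ 2) = (m <= d ^+ 2).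
Proof.
have m2 := m_ge2.
rewrite -subr_ge0 (_ : n%:R * d ^+ 2 - (m ^+ 2 - d ^+ 2) = m * (d ^+ 2 - m)); last by rewrite mE; ring.
by rewrite pmulr_rge0 ?subr_ge0 //; lra.
Qed.

Lemma G_inc d1 d2 : 0 <= d1 -> d1 <= d2 -> d2 ^+ 2 <= m -> G d1 <= G d2.
Proof.
move=> h0 h12 h2m.
have m2 := m_ge2.
have hd2 : d2 <= m by nra.
set s1 := Num.sqrt (m ^+ 2 - d1 ^+ 2); set s2 := Num.sqrt (m ^+ 2 - d2 ^+ 2).
have e1 : s1 ^+ 2 = m ^+ 2 - d1 ^+ 2 by apply: sq_s; apply/andP; split; lra.
have e2 : s2 ^+ 2 = m ^+ 2 - d2 ^+ 2 by apply: sq_s; apply/andP; split; lra.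
have s1p : 0 <= s1 by apply: sqrtr_ge0.
have s2p : 0 <= s2 by apply: sqrtr_ge0.
have hsn := sn_ge0; have hsn2 := sn2; have hmE := mE.
have k1 : sn * d1 <= s1.
  have : (sn * d1) ^+ 2 <= s1 ^+ 2 by rewrite exprMn hsn2 e1 sq_cmp; nra.
  by rewrite ler_pXn2r // ?nnegrE //; nra.
have k2 : sn * d2 <= s2.
  have : (sn * d2) ^+ 2 <= s2 ^+ 2 by rewrite exprMn hsn2 e2 sq_cmp.
  by rewrite ler_pXn2r // ?nnegrE //; nra.
have s1pos : 0 < s1.
  rewrite lt_neqAle s1p andbT; apply/eqP => h; move: e1; rewrite -h; nra.
rewrite /G -/s1 -/s2.
have key : (sn * (s1 - s2)) * (s1 + s2) <= (d2 - d1) * (s1 + s2).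
  have -> : (sn * (s1 - s2)) * (s1 + s2) = sn * (s1 ^+ 2 - s2 ^+ 2) by ring.
  rewrite e1 e2.
  have -> : sn * (m ^+ 2 - d1 ^+ 2 - (m ^+ 2 - d2 ^+ 2)) = (d2 - d1) * (sn * (d1 + d2)) by ring.
  apply: ler_wpM2l; lra.
rewrite ler_pM2r in key; last lra.
lra.
Qed.

Lemma G_inc_strict d1 d2 : 0 <= d1 -> d1 < d2 -> d2 ^+ 2 <= m -> G d1 < G d2.
Proof.
move=> h0 h12 h2m.
have m2 := m_ge2.
have hd2 : d2 <= m by nra.
set s1 := Num.sqrt (m ^+ 2 - d1 ^+ 2); set s2 := Num.sqrt (m ^+ 2 - d2 ^+ 2).
have e1 : s1 ^+ 2 = m ^+ 2 - d1 ^+ 2 by apply: sq_s; apply/andP; split; lra.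
have e2 : s2 ^+ 2 = m ^+ 2 - d2 ^+ 2 by apply: sq_s; apply/andP; split; lra.
have s1p : 0 <= s1 by apply: sqrtr_ge0.
have s2p : 0 <= s2 by apply: sqrtr_ge0.
have hsn := sn_ge0; have hsn2 := sn2; have hmE := mE.
have k1 : sn * d1 < s1.
  have : (sn * d1) ^+ 2 < s1 ^+ 2 by rewrite exprMn hsn2 e1 sq_cmp_lt; nra.
  by rewrite ltr_pXn2r // ?nnegrE //; nra.
have k2 : sn * d2 <= s2.
  have : (sn * d2) ^+ 2 <= s2 ^+ 2 by rewrite exprMn hsn2 e2; nra.
  by rewrite ler_pXn2r // ?nnegrE //; nra.
rewrite /G -/s1 -/s2.
have key : (sn * (s1 - s2)) * (s1 + s2) < (d2 - d1) * (s1 + s2).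
  have -> : (sn * (s1 - s2)) * (s1 + s2) = sn * (s1 ^+ 2 - s2 ^+ 2) by ring.
  rewrite e1 e2.
  have -> : sn * (m ^+ 2 - d1 ^+ 2 - (m ^+ 2 - d2 ^+ 2)) = (d2 - d1) * (sn * (d1 + d2)) by ring.
  rewrite ltr_pM2l; lra.
rewrite ltr_pM2r in key; last by have := mulr_ge0 hsn h0; lra.
lra.
Qed.

Lemma G_dec d1 d2 : m <= d1 ^+ 2 -> 0 <= d1 -> d1 <= d2 -> d2 <= m -> G d2 <= G d1.
Proof.
move=> h1m h0 h12 h2m.
have m2 := m_ge2.
set s1 := Num.sqrt (m ^+ 2 - d1 ^+ 2); set s2 := Num.sqrt (m ^+ 2 - d2 ^+ 2).
have e1 : s1 ^+ 2 = m ^+ 2 - d1 ^+ 2 by apply: sq_s; apply/andP; split; lra.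
have e2 : s2 ^+ 2 = m ^+ 2 - d2 ^+ 2 by apply: sq_s; apply/andP; split; lra.
have s1p : 0 <= s1 by apply: sqrtr_ge0.
have s2p : 0 <= s2 by apply: sqrtr_ge0.
have hsn := sn_ge0; have hsn2 := sn2; have hmE := mE.
have k1 : s1 <= sn * d1.
  have : s1 ^+ 2 <= (sn * d1) ^+ 2 by rewrite exprMn hsn2 e1 sq_cmp_ge.
  by rewrite ler_pXn2r // ?nnegrE //; nra.
have k2 : s2 <= sn * d2.
  have : s2 ^+ 2 <= (sn * d2) ^+ 2 by rewrite exprMn hsn2 e2 sq_cmp_ge; nra.
  by rewrite ler_pXn2r // ?nnegrE //; nra.
rewrite /G -/s1 -/s2.
have [z|pz] := eqVneq (s1 + s2) 0.
  have z1 : s1 = 0 by lra.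
  have z2 : s2 = 0 by lra.
  have : d1 = d2 by move: e1 e2; rewrite z1 z2; nra.
  by move=> e12; rewrite z1 z2 e12 !mulr0 lexx.
have key : (d2 - d1) * (s1 + s2) <= (sn * (s1 - s2)) * (s1 + s2).
  have -> : (sn * (s1 - s2)) * (s1 + s2) = sn * (s1 ^+ 2 - s2 ^+ 2) by ring.
  rewrite e1 e2.
  have -> : sn * (m ^+ 2 - d1 ^+ 2 - (m ^+ 2 - d2 ^+ 2)) = (d2 - d1) * (sn * (d1 + d2)) by ring.
  apply: ler_wpM2l; lra.
rewrite ler_pM2r in key; last by rewrite lt_neqAle eq_sym pz /=; lra.
lra.
Qed.

Lemma G_ge0 d : 0 <= d -> 0 <= G d.
Proof. move=> h; rewrite /G; have := sn_ge0; have := sqrtr_ge0 (m ^+ 2 - d ^+ 2); nra. Qed.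

Lemma G_le d : 0 <= d <= m -> G d <= m * sm.
Proof.
move=> hd; have /andP[h0 h1] := hd.
have e := sq_s d hd.
set s := Num.sqrt (m ^+ 2 - d ^+ 2) in e *.
have sp : 0 <= s by apply: sqrtr_ge0.
have hsn := sn_ge0; have hsn2 := sn2; have hsm2 := sm2; have hmE := mE.
have smp : 0 <= sm by apply: sqrtr_ge0.
have : G d ^+ 2 <= (m * sm) ^+ 2.
  rewrite /G -/s exprMn hsm2.
  have -> : (sn * s + d) ^+ 2 = m ^+ 3 - (s - sn * d) ^+ 2.
    have -> : m ^+ 3 = m * (s ^+ 2 + d ^+ 2) by rewrite e; ring.
    rewrite hmE; have : sn ^+ 2 = n%:R := hsn2; nra.
  have := sqr_ge0 (s - sn * d); nra.
have hG := G_ge0 d h0; have hm : 0 <= m * sm by apply: mulr_ge0 => //; have := m_ge2; lra.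
by rewrite ler_pXn2r // ?nnegrE.
Qed.

Lemma G_eq d : 0 <= d <= m -> G d = m * sm -> d ^+ 2 = m.
Proof.
move=> hd; have /andP[h0 h1] := hd.
have e := sq_s d hd.
set s := Num.sqrt (m ^+ 2 - d ^+ 2) in e *.
have sp : 0 <= s by apply: sqrtr_ge0.
have hsn := sn_ge0; have hsn2 := sn2; have hsm2 := sm2; have hmE := mE.
move=> hG.
have : G d ^+ 2 = (m * sm) ^+ 2 by rewrite hG.
rewrite /G -/s exprMn hsm2.
have -> : (sn * s + d) ^+ 2 = m ^+ 3 - (s - sn * d) ^+ 2.
  have -> : m ^+ 3 = m * (s ^+ 2 + d ^+ 2) by rewrite e; ring.
  rewrite hmE; nra.
move=> h.
have hz : (s - sn * d) ^+ 2 = 0 by move: h; rewrite expr2 [in RHS]expr2 -[m ^+ 3]/(m * (m * m)); nra.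
have : s = sn * d by move/eqP: hz; rewrite sqrf_eq0 subr_eq0 => /eqP.
move=> hs.
have : s ^+ 2 = n%:R * d ^+ 2 by rewrite hs exprMn hsn2.
rewrite e hmE; have m2 := m_ge2; rewrite hmE in m2; nra.
Qed.

Lemma G0 : G 0 = m * sn.
Proof.
rewrite /G expr0n /= subr0 sqrtr_sqr addr0 mulrC ger0_norm //.
Qed.

Lemma psiE (t : R) : psi n t = G `|m - 2 * t| / m.
Proof.
have m2 := m_ge2.
have mne : m != 0 by apply/negP => /eqP h; lra.
rewrite /psi /G real_normK ?num_real //.
have -> : t * (m - t) = (1 / 4) * (m ^+ 2 - (m - 2 * t) ^+ 2) by field.
rewrite sqrtrM; last lra.
have -> : Num.sqrt (1 / 4 : R) = 1 / 2.
  have -> : (1 / 4 : R) = (1 / 2) ^+ 2 by field.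
  by rewrite sqrtr_sqr ger0_norm //; lra.
have -> : 1 - 2 * t / m = (m - 2 * t) / m by field.
rewrite normrM [`|m^-1|]ger0_norm; last by rewrite invr_ge0; lra.
by field.
Qed.


Lemma sm_ge1 : 1 <= sm.
Proof. have := m_ge2; have := sm2; have := sqrtr_ge0 m; nra. Qed.

Lemma sm_le_m : sm <= m.
Proof. have := m_ge2; have := sm2; have := sqrtr_ge0 m; nra. Qed.

Lemma natD21 (j : nat) : (j.*2.+1%:R : R) = 2 * j%:R + 1.
Proof. by rewrite -natr1 -mul2n natrM. Qed.
Lemma natD22 (j : nat) : (j.*2.+2%:R : R) = 2 * j%:R + 2.
Proof. by rewrite -natr1 -natr1 -mul2n natrM -addrA. Qed.

Definition x0 : R := m / 2 - sm / 2.

Lemma floor_nat : exists k : nat, Num.floor x0 = k%:Z /\ (k.*2.+2 <= n.+1)%N /\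
   k%:R <= x0 < k%:R + 1.
Proof.
have hx0 : 0 <= x0 by rewrite /x0; have := sm_le_m; lra.
have ha : 0 <= Num.floor x0 by rewrite floor_ge0.
exists `|Num.floor x0|%N; rewrite gez0_abs //.
have := floor_itv x0; rewrite -[Num.floor x0]gez0_abs // intrD /= => /andP[h1 h2].
split => //; split; last by apply/andP; split.
rewrite leqNgt; apply/negP => hlt.
have : (n.+1%:R : R) <= (`|Num.floor x0|%N).*2.+1%:R by rewrite ler_nat.
rewrite natD21.
move: h1; rewrite /x0 => h1 h3.
have := sm2; have := m_ge2; have := sqrtr_ge0 m; nra.
Qed.

Section WithK.
Variable k : nat.
Hypothesis hk2 : (k.*2.+2 <= n.+1)%N.
Hypothesis hkx : k%:R <= x0 < k%:R + 1.

Let da : R := m - 2 * k%:R.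
Let db : R := m - 2 * k.+1%:R.

Lemma da_ge : sm <= da.
Proof. move/andP: hkx => [h1 _]; move: h1; rewrite /da /x0; lra. Qed.

Lemma db_lt : db < sm.
Proof. move/andP: hkx => [_ h1]; move: h1; rewrite /db /x0 -natr1; lra. Qed.

Lemma db_ge0 : 0 <= db.
Proof.
have : (k.*2.+2%:R : R) <= n.+1%:R by rewrite ler_nat.
rewrite /db natD22 -natr1; lra.
Qed.

Lemma da_le : da <= m.
Proof. rewrite /da; have := ler0n R k; lra. Qed.

Lemma da_sq : m <= da ^+ 2.
Proof. have := da_ge; have := sm2; have := sqrtr_ge0 m; nra. Qed.

Lemma db_sq : db ^+ 2 < m.
Proof. have := db_lt; have := db_ge0; have := sm2; have := sqrtr_ge0 m; nra. Qed.

Lemma disc_half j : (j.*2 <= n.+1)%N -> G `|m - 2 * j%:R| <= Num.max (G da) (G db).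
Proof.
move=> hj.
have hj' : (2 * j%:R : R) <= m by rewrite -natrM ler_nat mul2n.
rewrite ger0_norm; last lra.
have [hjk|hjk] := leqP j k.
  have : (j%:R : R) <= k%:R by rewrite ler_nat.
  move=> hjk'; rewrite le_max; apply/orP; left.
  apply: G_dec; [exact: da_sq | have := da_ge; have := sm_ge1; lra | rewrite /da; lra | have := ler0n R j; lra].
have : (k.+1%:R : R) <= j%:R by rewrite ler_nat.
move=> hjk'; rewrite le_max; apply/orP; right.
apply: G_inc; [lra | rewrite /db; lra | exact/ltW/db_sq].
Qed.

Lemma disc j : (j <= n.+1)%N -> G `|m - 2 * j%:R| <= Num.max (G da) (G db).
Proof.
move=> hj.
have [h|h] := leqP j.*2 n.+1; first exact: disc_half.
have h' : ((n.+1 - j).*2 <= n.+1)%N by rewrite doubleB; lia.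
have := disc_half (n.+1 - j) h'.
rewrite natrB // (_ : m - 2 * (m - j%:R) = - (m - 2 * j%:R)); last ring.
by rewrite normrN.
Qed.

Lemma psi_a : psi n (k%:Z)%:~R = G da / m.
Proof. have -> : ((k%:Z)%:~R : R) = k%:R by []. rewrite psiE ger0_norm //. have := da_ge; have := sm_ge1; rewrite /da; lra. Qed.

Lemma psi_a1 : psi n (k%:Z + 1)%:~R = G db / m.
Proof.
rewrite psiE intrD /= natr1 ger0_norm //; exact: db_ge0.
Qed.


Definition Mx : R := Num.max (G da) (G db) / m.

Lemma m_gt0 : 0 < m. Proof. have := m_ge2; lra. Qed.

Lemma daE : da = (n.+1 - k.*2)%:R.
Proof. rewrite natrB; last lia. by rewrite -mul2n natrM. Qed.

Lemma dbE : db = (n.+1 - k.*2.+2)%:R.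
Proof. rewrite natrB // natD22 /db -natr1; ring. Qed.

Lemma M_ge : sn <= Mx.
Proof.
rewrite /Mx ler_pdivlMr; last exact: m_gt0.
rewrite le_max; apply/orP; right.
rewrite mulrC -G0; apply: G_inc; [lra | exact: db_ge0 | exact/ltW/db_sq].
Qed.

Lemma M_le : Mx <= sm.
Proof.
have hm := m_gt0.
rewrite /Mx ler_pdivrMr // ge_max mulrC; apply/andP; split; apply: G_le; apply/andP; split.
- by have := da_ge; have := sm_ge1; lra.
- exact: da_le.
- exact: db_ge0.
- by rewrite /db; have := ler0n R k.+1; lra.
Qed.

Lemma M_sn : Mx = sn -> n = 1%N.
Proof.
move=> hM; apply/eqP; rewrite eqn_leq hn andbT leqNgt; apply/negP => hn2.
have hm := m_gt0.
suff : m * sn < Num.max (G da) (G db).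
  move=> h; have : sn < Mx by rewrite /Mx ltr_pdivlMr // mulrC.
  by rewrite hM ltxx.
have [e|lt] := eqVneq k.*2.+2 n.+1.
  have hda : da = 2 by rewrite daE -e; rewrite subSn ?leqnSn // subSn // subnn.
  rewrite lt_max; apply/orP; left.
  rewrite -G0 hda; apply: G_inc_strict; [lra | lra |].
  have h4n : (4 <= n.+1)%N by move: e hn2; rewrite -!mul2n; lia.
  have : (4%:R : R) <= m by rewrite ler_nat.
  by rewrite (_ : (2 : R) ^+ 2 = 4%:R) //; ring.
rewrite lt_max; apply/orP; right.
rewrite -G0; apply: G_inc_strict; [lra | | exact/ltW/db_sq].
rewrite dbE (_ : (0 : R) = 0%:R) // ltr_nat; lia.
Qed.

Lemma M_one : n = 1%N -> Mx = sn.
Proof.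
move=> e.
have k0 : k = 0%N by move: hk2; rewrite e; lia.
have hsn : sn = 1 by rewrite e sqrtr1.
have hm := m_gt0.
have hda : da = m by rewrite /da k0 mulr0 subr0.
have hdb : db = 0 by rewrite dbE e k0.
rewrite /Mx hda hdb G0 hsn mulr1 /G subrr sqrtr0 mulr0 add0r maxxx divff //.
Qed.

Lemma M_sm : Mx = sm <-> exists k' : nat, sm = k'%:R.
Proof.
have hm := m_gt0.
have smp := sqrtr_ge0 m.
have hsm2 := sm2.
split.
  move=> hM.
  have hmax : Num.max (G da) (G db) = m * sm.
    by rewrite -hM /Mx mulrC divfK // gt_eqF.
  have [h|h] := leP (G da) (G db).
    move: hmax; rewrite max_r // => hG.
    exists (n.+1 - k.*2.+2)%N; rewrite -dbE.
    have h0 := db_ge0.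
    have : db ^+ 2 = m by apply: G_eq => //; apply/andP; split => //; rewrite /db; have := ler0n R k.+1; lra.
    nra.
  move: hmax; rewrite max_l ?ltW // => hG.
  exists (n.+1 - k.*2)%N; rewrite -daE.
  have h0 : 0 <= da by have := da_ge; lra.
  have : da ^+ 2 = m by apply: G_eq => //; apply/andP; split => //; exact: da_le.
  nra.
move=> [k' hk'].
suff hda : da = sm.
  apply/eqP; rewrite eq_le M_le /= /Mx ler_pdivlMr //.
  rewrite le_max; apply/orP; left; rewrite /G hda.
  have -> : m ^+ 2 - sm ^+ 2 = m * n%:R by rewrite hsm2 mE; ring.
  rewrite sqrtrM; last lra.
  have := sn2; rewrite mE => h; rewrite mE in hsm2; nra.
have hsq : (k' ^ 2)%N = n.+1.
  apply/eqP; rewrite -(eqr_nat R) natrX -hk' hsm2 //.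
have h1 := da_ge; have h2 := db_lt.
have hdd : db = da - 2 by rewrite /db /da -natr1; ring.
move: h1 h2; rewrite hdd hk' daE => h1 h2.
have h3 : ((n.+1 - k.*2)%N%:R : R) < (k' + 2)%N%:R by rewrite natrD; lra.
rewrite ler_nat in h1; rewrite ltr_nat in h3.
have [e|ne] := eqVneq (n.+1 - k.*2)%N k'; first by rewrite e.
have e : (n.+1 - k.*2)%N = k'.+1 by lia.
exfalso.
have : odd n.+1 = odd k'.
  by rewrite -hsq oddX.
have : n.+1 = (k.*2 + (n.+1 - k.*2))%N by lia.
move=> ->; rewrite oddD odd_double e /=.
by case: (odd k').
Qed.

End WithK.

End PartA.


Set Implicit Arguments. Unset Strict Implicit.

Section Dot.
Variables (R : realType) (n : nat).
Implicit Types u v w : 'rV[R]_n.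

Definition dot u v : R := \sum_(i < n) u ord0 i * v ord0 i.

Lemma dotC u v : dot u v = dot v u.
Proof. by apply: eq_bigr => i _; rewrite mulrC. Qed.

Lemma dotDl u v w : dot (u + v) w = dot u w + dot v w.
Proof. by rewrite /dot -big_split; apply: eq_bigr => i _; rewrite mxE mulrDl. Qed.

Lemma dotBl u v w : dot (u - v) w = dot u w - dot v w.
Proof. by rewrite /dot -sumrB; apply: eq_bigr => i _; rewrite !mxE mulrBl. Qed.

Lemma dotZl (a : R) u w : dot (a *: u) w = a * dot u w.
Proof. by rewrite /dot mulr_sumr; apply: eq_bigr => i _; rewrite mxE mulrA. Qed.

Lemma dotDr u v w : dot w (u + v) = dot w u + dot w v.
Proof. by rewrite dotC dotDl !(dotC w). Qed.
Lemma dotBr u v w : dot w (u - v) = dot w u - dot w v.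
Proof. by rewrite dotC dotBl !(dotC w). Qed.
Lemma dotZr (a : R) u w : dot w (a *: u) = a * dot w u.
Proof. by rewrite dotC dotZl dotC. Qed.

Lemma dot_suml (I : finType) (F : I -> 'rV[R]_n) w :
  dot (\sum_i F i) w = \sum_i dot (F i) w.
Proof.
rewrite /dot (exchange_big) /=; apply: eq_bigr => j _.
by rewrite summxE mulr_suml.
Qed.

Lemma dot_sumr (I : finType) (F : I -> 'rV[R]_n) w :
  dot w (\sum_i F i) = \sum_i dot w (F i).
Proof. by rewrite dotC dot_suml; apply: eq_bigr => i _; rewrite dotC. Qed.

Lemma dot_ge0 u : 0 <= dot u u.
Proof. by apply: sumr_ge0 => i _; rewrite -expr2 sqr_ge0. Qed.

Lemma enorm_sq u : enorm u ^+ 2 = dot u u.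
Proof.
rewrite /enorm sqr_sqrtr; last by apply: sumr_ge0 => i _; rewrite sqr_ge0.
by apply: eq_bigr => i _; rewrite expr2.
Qed.

Lemma enormE u : enorm u = Num.sqrt (dot u u).
Proof. by rewrite /enorm; congr Num.sqrt; apply: eq_bigr => i _; rewrite expr2. Qed.

Lemma dot_eq0 u : dot u u = 0 -> u = 0.
Proof.
move=> h; apply/rowP => i; rewrite mxE.
have H : u ord0 i * u ord0 i = 0.
  apply: (@psumr_eq0P _ _ xpredT (fun i => u ord0 i * u ord0 i)) => //.
  by move=> j _; rewrite -expr2 sqr_ge0.
by apply/eqP; rewrite -sqrf_eq0 expr2 H.
Qed.

Lemma dot_cs z w (r : R) : 0 < r -> dot z z <= r ^+ 2 ->
  dot z w <= r * Num.sqrt (dot w w).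
Proof.
move=> hr hz.
set W := Num.sqrt (dot w w).
have hW : 0 <= W by apply: sqrtr_ge0.
have hW2 : W ^+ 2 = dot w w by rewrite sqr_sqrtr // dot_ge0.
have [W0|Wpos] := eqVneq W 0.
  have : dot w w = 0 by rewrite -hW2 W0 expr0n.
  move/dot_eq0 => w0; rewrite W0 mulr0 w0 /dot big1 // => i _; by rewrite mxE mulr0.
have Wp : 0 < W by rewrite lt_neqAle eq_sym Wpos.
have h := dot_ge0 (W *: z - r *: w).
rewrite dotBl !dotBr !dotZl !dotZr (dotC w z) -hW2 in h.
have : W * r * (r * W - dot z w) >= 0 by nra.
by rewrite pmulr_rge0 ?subr_ge0 // mulr_gt0.
Qed.

End Dot.

Section Cont.
Variables (R : realType) (n : nat).

Lemma cont_sum (I : Type) (s : seq I) (F : I -> 'rV[R]_n -> R) :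
  (forall i, continuous (F i)) -> continuous (fun y => \sum_(i <- s) F i y).
Proof.
move=> hF; elim: s => [|a s IH].
  rewrite (_ : (fun y => _) = fun=> 0); first exact: cst_continuous.
  by apply/funext => y; rewrite big_nil.
rewrite (_ : (fun y => _) = (F a) + (fun y => \sum_(i <- s) F i y)); last first.
  by apply/funext => y; rewrite big_cons.
by move=> y; apply: continuousD; [exact: hF | exact: IH].
Qed.

Lemma cont_mul (f g : 'rV[R]_n -> R) : continuous f -> continuous g ->
  continuous (fun y => f y * g y).
Proof. by move=> hf hg y; apply: continuousM; [exact: hf | exact: hg]. Qed.

Lemma cont_coordB (w : 'rV[R]_n) i : continuous (fun y : 'rV[R]_n => (y - w) ord0 i).
Proof.
rewrite (_ : (fun y => _) = (fun y : 'rV[R]_n => y ord0 i) - (fun=> w ord0 i)); last first.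
  by apply/funext => y; rewrite !mxE.
move=> y; apply: continuousB; [exact: coord_continuous | exact: cst_continuous].
Qed.

Lemma cont_dot (w v : 'rV[R]_n) : continuous (fun y : 'rV[R]_n => dot (y - w) v).
Proof.
apply: cont_sum => i; apply: cont_mul; first exact: cont_coordB.
exact: cst_continuous.
Qed.

Lemma cont_enorm (w : 'rV[R]_n) : continuous (fun y : 'rV[R]_n => enorm (y - w)).
Proof.
rewrite (_ : (fun y : 'rV[R]_n => enorm (y - w)) =
  (@Num.sqrt R) \o (fun y : 'rV[R]_n => \sum_(i < n) (y - w) ord0 i ^+ 2)) //.
move=> y; apply: continuous_comp; last exact: sqrt_continuous.
apply: cont_sum => i.
rewrite (_ : (fun y => _) = fun y => (y - w) ord0 i * (y - w) ord0 i); last first.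
  by apply/funext => z; rewrite expr2.
by apply: cont_mul; exact: cont_coordB.
Qed.

Lemma cball_closed (c : 'rV[R]_n) (r : R) : closed (cball c r).
Proof.
have -> : cball c r = (fun y => enorm (y - c)) @^-1` [set t : R | t <= r] by [].
apply: preimage_closed; last exact: closed_le.
by move=> y _; exact: cont_enorm.
Qed.

Lemma coord_le (v : 'rV[R]_n) i : v ord0 i ^+ 2 <= enorm v ^+ 2.
Proof.
rewrite /enorm sqr_sqrtr; last by apply: sumr_ge0 => j _; rewrite sqr_ge0.
rewrite (bigD1 i) //= lerDl; by apply: sumr_ge0 => j _; rewrite sqr_ge0.
Qed.

Lemma cball_compact (c : 'rV[R]_n) (r : R) : 0 <= r -> compact (cball c r).
Proof.
move=> hr.
have hbox := @rV_compact _ n (fun i => `[c ord0 i - r, c ord0 i + r]%classic)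
  (fun i => @segment_compact R _ _).
apply: (subclosed_compact (@cball_closed c r) hbox).
move=> y hy i /=; rewrite in_itv /=.
have h1 := coord_le (y - c) i.
have h2 : enorm (y - c) ^+ 2 <= r ^+ 2.
  by rewrite ler_pXn2r // ?nnegrE //; rewrite /enorm sqrtr_ge0.
have h3 : `|(y - c) ord0 i| <= r.
  by rewrite -(ler_pXn2r (isT : (0 < 2)%N)) ?nnegrE // real_normK ?num_real //; lra.
move: h3; rewrite !mxE ler_norml => /andP[h4 h5]; apply/andP; split; lra.
Qed.

Lemma cont_bounded (B : set 'rV[R]_n) (f : 'rV[R]_n -> R) : compact B ->
  {within B, continuous f} -> exists M, forall y, B y -> `|f y| <= M.
Proof.
move=> hB hf.
have := compact_bounded (continuous_compact hf hB).
move=> [M [Mreal HM]].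
exists (`|M| + 1) => y hy.
have := HM (`|M| + 1); rewrite ?real_ler_norm //.
have hlt : M < `|M| + 1 by have := real_ler_norm Mreal; lra.
by move=> /(_ hlt) H; apply: (H (f y)); exists y.
Qed.

End Cont.

Lemma cnt_lt (mm kk : nat) : (\sum_(j < mm) (j < kk : nat))%N = minn kk mm.
Proof.
elim: mm => [|mm IH]; first by rewrite big_ord0 minn0.
rewrite big_ord_recr /= IH.
case: (ltnP mm kk) => h /=; lia.
Qed.

Section Geom.
Variables (R : realType) (n : nat).
Hypothesis hn : (1 <= n)%N.
Variables (c : 'rV[R]_n) (r : R) (x : 'I_n.+1 -> 'rV[R]_n).
Hypothesis hr : 0 < r.
Hypothesis hnd : nondegenerate x.
Hypothesis hxr : forall j, enorm (x j - c) = r.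
Variable del : R.
Hypothesis hdel : 0 < del.
Hypothesis hdist : forall i j, i != j -> enorm (x i - x j) = del.

Local Notation m := (n.+1%:R : R).
Local Notation sn := (Num.sqrt (n%:R : R)).

Definition u j := x j - c.
Definition g : R := r ^+ 2 - del ^+ 2 / 2.

Lemma gram_diag j : dot (u j) (u j) = r ^+ 2.
Proof. by rewrite -enorm_sq hxr. Qed.

Lemma gram_off i j : i != j -> dot (u i) (u j) = g.
Proof.
move=> hij.
have h : dot (u i - u j) (u i - u j) = del ^+ 2.
  by rewrite -enorm_sq /u opprB addrA subrK hdist.
rewrite (dotBl (u i) (u j)) (dotBr (u i) (u j) (u i)) (dotBr (u i) (u j) (u j)) !gram_diag (dotC (u j)) in h.
rewrite /g; lra.
Qed.

Lemma sum_gram (v : 'I_n.+1 -> R) i :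
  \sum_j v j * dot (u j) (u i) = g * \sum_j v j + v i * (r ^+ 2 - g).
Proof.
rewrite (bigD1 i) //= (bigD1 i (P := xpredT)) //= gram_diag mulrDr.
rewrite (eq_bigr (fun j => v j * g)); last first.
  by move=> j hj; rewrite gram_off // eq_sym.
rewrite -mulr_suml; ring.
Qed.

Lemma g_val : r ^+ 2 + n%:R * g = 0.
Proof.
pose U : 'M[R]_(n.+1, n) := \matrix_(j, k) u j ord0 k.
pose K := kermx U.
have hK : K != 0.
  apply/negP => /eqP hK0.
  have := mxrank_ker U; rewrite -/K hK0 mxrank0.
  have := rank_leq_col U; lia.
have [j0 hj0] : exists j0, row j0 K != 0.
  apply/existsP; apply: contraR hK => /existsPn hr0.
  by apply/eqP/row_matrixP => i; rewrite row0; apply/eqP/negPn/hr0.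
pose v := row j0 K.
have hv : v *m U = 0 by rewrite /v -row_mul mulmx_ker row0.
have hrowU j : row j U = u j by apply/rowP => k; rewrite !mxE.
have hsum : \sum_j v ord0 j *: u j = 0.
  by rewrite -[RHS]hv mulmx_sum_row; apply: eq_bigr => j _; rewrite hrowU.
set S := \sum_j v ord0 j.
set D := r ^+ 2 - g.
have hD : 0 < D by rewrite /D /g; have := mulr_gt0 hdel hdel; rewrite -expr2; lra.
have E i : g * S + v ord0 i * D = 0.
  rewrite -sum_gram.
  rewrite (eq_bigr (fun j => dot (v ord0 j *: u j) (u i))); last by move=> j _; rewrite dotZl.
  rewrite -dot_suml.
  by rewrite hsum /dot big1 // => k _; rewrite mxE mul0r.
have hS : S != 0.
  apply/negP => /eqP S0; move: hj0; rewrite -/v => /negP; apply; apply/eqP/rowP => i.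
  have := E i; rewrite S0 mulr0 add0r => /eqP; rewrite mulf_eq0 (gt_eqF hD) orbF => /eqP ->.
  by rewrite mxE.
have Esum : \sum_(i < n.+1) (g * S + v ord0 i * D) = 0 by rewrite big1.
rewrite big_split /= sumr_const card_ord -mulr_suml -/S -mulr_natl in Esum.
have : S * (m * g + D) = 0 by rewrite -Esum; ring.
move/eqP; rewrite mulf_eq0 (negbTE hS) /= => /eqP.
rewrite /D -natr1; lra.
Qed.


Definition kap : R := n%:R / (m * r ^+ 2).
Definition lam j (y : 'rV[R]_n) : R := 1 / m + kap * dot (y - c) (u j).
Definition Lf (v : 'I_n.+1 -> R) (y : 'rV[R]_n) : R := \sum_j v j * lam j y.

Lemma m_pos : 0 < m. Proof. by rewrite ltr0n. Qed.
Lemma m_neq0 : m != 0. Proof. by rewrite gt_eqF // m_pos. Qed.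
Lemma m1_neq0 : (n%:R + 1 : R) != 0. Proof. by rewrite natr1 m_neq0. Qed.
Lemma m1'_neq0 : (1 + n%:R : R) != 0. Proof. by rewrite addrC m1_neq0. Qed.
Lemma r_neq0 : r != 0. Proof. by rewrite gt_eqF. Qed.

Lemma lam_node i j : lam j (x i) = (i == j)%:R.
Proof.
have hm := m_pos; have hr2 : 0 < r ^+ 2 by exact: exprn_gt0.
rewrite /lam -/(u i) /kap.
have [->|ne] := eqVneq i j.
  rewrite gram_diag /= -natr1; field.
  by rewrite -natr1 in hm; rewrite (gt_eqF hr) (gt_eqF hm).
rewrite gram_off //=.
have hg : n%:R * g = - r ^+ 2 by have := g_val; lra.
rewrite -natr1 in hm *.
have -> : n%:R / ((n%:R + 1) * r ^+ 2) * g = (n%:R * g) / ((n%:R + 1) * r ^+ 2) by ring.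
rewrite hg; field.
by rewrite (gt_eqF hr) (gt_eqF hm).
Qed.

Lemma Lf_node v i : Lf v (x i) = v i.
Proof.
rewrite /Lf (bigD1 i) //= lam_node eqxx mulr1 big1 ?addr0 // => j hj.
by rewrite lam_node eq_sym (negbTE hj) mulr0.
Qed.

Lemma Lf_affine v : is_affine (Lf v).
Proof.
exists (\sum_j v j * (1 / m - kap * dot c (u j))).
exists (\sum_j (v j * kap) *: u j).
move=> y; rewrite -/(dot _ y) dot_suml /Lf -big_split /=.
apply: eq_bigr => j _; rewrite dotZl /lam dotBl (dotC y) (dotC c); ring.
Qed.

Lemma affine_unique p q : is_affine p -> is_affine q ->
  (forall j, p (x j) = q (x j)) -> forall y, p y = q y.
Proof.
move=> [a [b hp]] [a' [b' hq]] hpq y.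
have hp' z : p z = a + dot b z by rewrite hp.
have hq' z : q z = a' + dot b' z by rewrite hq.
pose beta := b - b'.
have hj j : (a - a') + dot beta (x j) = 0.
  by move: (hpq j); rewrite hp' hq' /beta dotBl => h; lra.
pose M : 'M[R]_n := \matrix_(i < n) (x (lift ord0 i) - x ord0).
have hM : M \in unitmx by rewrite -row_free_unit.
have hMb : M *m beta^T = 0.
  apply/matrixP => i k; rewrite !mxE.
  have e : \sum_j M i j * beta^T j k = dot beta (x (lift ord0 i) - x ord0).
    rewrite dotC /dot; apply: eq_bigr => l _; rewrite !mxE.
    by rewrite (ord1 k).
  rewrite e dotBr; have := hj (lift ord0 i); have := hj ord0; lra.
have hb : beta = 0.
  apply: trmx_inj; rewrite trmx0.
  by rewrite -(mulKmx hM beta^T) hMb mulmx0.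
have hbb : b = b' by apply/eqP; rewrite -subr_eq0 -/beta hb.
rewrite hp' hq' hbb.
have := hj ord0; rewrite hb /dot big1 => [h|l _]; last by rewrite mxE mul0r.
by have -> : a = a' by lra.
Qed.

Section Signs.
Variable tau : 'I_n.+1 -> bool.
Definition sig j : R := if tau j then 1 else -1.
Definition ss : R := \sum_j sig j.
Definition ww : 'rV[R]_n := \sum_j sig j *: u j.
Definition NN : nat := (\sum_j (~~ tau j : nat))%N.

Lemma sig2 j : sig j * sig j = 1.
Proof. by rewrite /sig; case: (tau j); rewrite ?mulr1 ?mulrNN ?mulr1. Qed.

Lemma NN_le : (NN <= n.+1)%N.
Proof.
rewrite /NN; apply: (@leq_trans (\sum_(j < n.+1) (j < n.+1 : nat))).
  by apply: leq_sum => j _; rewrite ltn_ord; case: (tau j).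
by rewrite cnt_lt minnn.
Qed.

Lemma ssE : ss = m - 2 * NN%:R.
Proof.
rewrite /ss /NN natr_sum mulr_sumr.
have -> : m = \sum_(j < n.+1) (1 : R) by rewrite sumr_const card_ord.
rewrite -sumrB.
by apply: eq_bigr => j _; rewrite /sig; case: (tau j) => /=; ring.
Qed.

Lemma dot_ww : dot ww ww = r ^+ 2 * (m ^+ 2 - ss ^+ 2) / n%:R.
Proof.
have hn0 : (n%:R : R) != 0 by rewrite pnatr_eq0 -lt0n.
have e1 : dot ww ww = \sum_i sig i * (g * ss + sig i * (r ^+ 2 - g)).
  rewrite {1}/ww dot_suml; apply: eq_bigr => i _; rewrite dotZl; congr (_ * _).
  rewrite /ww dot_sumr -/ss -sum_gram; apply: eq_bigr => j _.
  by rewrite dotZr dotC.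
have e2 : \sum_i sig i * (g * ss + sig i * (r ^+ 2 - g)) = g * ss ^+ 2 + m * (r ^+ 2 - g).
  rewrite (eq_bigr (fun i => sig i * (g * ss) + (r ^+ 2 - g))); last first.
    by move=> i _; rewrite mulrDr [sig i * (sig i * _)]mulrA sig2 mul1r.
  rewrite big_split /= -mulr_suml -/ss.
  by rewrite sumr_const card_ord -mulr_natl; ring.
rewrite e1 e2.
have hg : g = - r ^+ 2 / n%:R.
  by apply: (mulfI hn0); rewrite [RHS]mulrC divfK //; have := g_val; lra.
by rewrite hg -natr1; field.
Qed.

Lemma ss_sq : ss ^+ 2 <= m ^+ 2.
Proof.
have := dot_ge0 ww; rewrite dot_ww.
have hr2 : 0 < r ^+ 2 by exact: exprn_gt0.
have hn' : 0 < (n%:R : R) by rewrite ltr0n.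
rewrite pmulr_lge0 ?invr_gt0 // pmulr_rge0 // subr_ge0 //.
Qed.

Lemma sum_sig y : \sum_j sig j * lam j y = ss / m + kap * dot (y - c) ww.
Proof.
rewrite /ww dot_sumr mulr_sumr /ss mulr_suml -big_split /=.
by apply: eq_bigr => j _; rewrite dotZr /lam; ring.
Qed.

Lemma kap_ww : kap * (r * Num.sqrt (dot ww ww)) = sn * Num.sqrt (m ^+ 2 - ss ^+ 2) / m.
Proof.
have hm := m_pos.
have hn' : 0 < (n%:R : R) by rewrite ltr0n.
have hr2 : 0 < r ^+ 2 by exact: exprn_gt0.
have hX : 0 <= m ^+ 2 - ss ^+ 2 by have := ss_sq; lra.
have key : n%:R * Num.sqrt (dot ww ww) = r * (sn * Num.sqrt (m ^+ 2 - ss ^+ 2)).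
  apply: (@pexpIrn _ 2) => //; rewrite ?nnegrE.
  - by rewrite !mulr_ge0 ?sqrtr_ge0 ?ler0n.
  - by rewrite !mulr_ge0 ?sqrtr_ge0 ?ler0n // ltW.
  rewrite !exprMn !sqr_sqrtr ?dot_ge0 // ?ler0n // dot_ww.
  field; by rewrite (gt_eqF hn').
rewrite /kap.
have -> : n%:R / (m * r ^+ 2) * (r * Num.sqrt (dot ww ww)) =
   (n%:R * Num.sqrt (dot ww ww)) / (m * r) by field; rewrite ?m_neq0 ?m1_neq0 ?m1'_neq0 ?r_neq0.
rewrite key; field; by rewrite ?m_neq0 ?m1_neq0 ?m1'_neq0 ?r_neq0.
Qed.

Lemma bound_sig y : dot (y - c) (y - c) <= r ^+ 2 ->
  \sum_j sig j * lam j y <= G R n `|m - 2 * NN%:R| / m.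
Proof.
move=> hy.
have hm := m_pos.
rewrite sum_sig -ssE.
have hk : 0 <= kap by rewrite /kap divr_ge0 // mulr_ge0 ?sqr_ge0 //; lra.
have h1 : kap * dot (y - c) ww <= kap * (r * Num.sqrt (dot ww ww)).
  by apply: ler_wpM2l => //; apply: dot_cs.
rewrite kap_ww in h1.
rewrite /G (real_normK (num_real ss)).
have : ss <= `|ss| by exact: ler_norm.
move=> hs.
have hmi : 0 <= m^-1 by rewrite invr_ge0 ltW.
rewrite mulrDl; have := ler_wpM2r hmi hs => h2.
by rewrite [X in _ <= X]addrC; apply: lerD.
Qed.

End Signs.

Lemma Lf_bound v y (B : R) : dot (y - c) (y - c) <= r ^+ 2 ->
  (forall j, `|v j| <= 1) ->
  (forall N : nat, (N <= n.+1)%N -> G R n `|m - 2 * N%:R| / m <= B) ->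
  `|Lf v y| <= B.
Proof.
move=> hy hv hB.
pose tau := fun j => 0 <= lam j y.
apply: le_trans (ler_norm_sum _ _ _) _.
apply: le_trans (hB _ (NN_le tau)); apply: le_trans (bound_sig tau hy).
apply: ler_sum => j _; rewrite normrM.
have -> : sig tau j * lam j y = `|lam j y|.
  rewrite /sig /tau; case: ifP => h; first by rewrite mul1r ger0_norm.
  by rewrite ltr0_norm ?mulN1r //; rewrite real_ltNge ?num_real // h.
by rewrite ler_piMl // normr_ge0.
Qed.


Lemma attain (kk : nat) : (kk.*2 <= n.+1)%N -> exists y,
  dot (y - c) (y - c) <= r ^+ 2 /\
  Lf (sig (fun j : 'I_n.+1 => (kk <= j)%N)) y = G R n (m - 2 * kk%:R) / m.
Proof.
move=> hkk.
pose tau := fun j : 'I_n.+1 => (kk <= j)%N.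
have hNN : NN tau = kk.
  rewrite /NN (eq_bigr (fun j : 'I_n.+1 => (j < kk : nat))); last by move=> j _; rewrite /tau -ltnNge.
  by rewrite cnt_lt; apply/minn_idPl; lia.
have hss : ss tau = m - 2 * kk%:R by rewrite ssE hNN.
have hss0 : 0 <= ss tau.
  rewrite hss; have : (2 * kk%:R : R) <= m by rewrite -natrM ler_nat mul2n.
  lra.
set W := Num.sqrt (dot (ww tau) (ww tau)).
have hW : 0 <= W by exact: sqrtr_ge0.
have hW2 : W ^+ 2 = dot (ww tau) (ww tau) by rewrite sqr_sqrtr // dot_ge0.
have hval : kap * dot (if W == 0 then 0 else (r / W) *: ww tau) (ww tau) = kap * (r * W).
  have [W0|Wn] := eqVneq W 0.
    by rewrite W0 mulr0 /dot big1 // => i _; rewrite mxE mul0r.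
  by rewrite dotZl -hW2; congr (_ * _); field.
exists (c + (if W == 0 then 0 else (r / W) *: ww tau)); split.
  rewrite (addrC c) addrK.
  have [W0|Wn] := eqVneq W 0.
    by rewrite /dot big1 ?sqr_ge0 // => i _; rewrite mxE mul0r.
  rewrite dotZl dotZr -hW2; have -> : r / W * (r / W * W ^+ 2) = r ^+ 2 by field.
  by [].
rewrite /Lf sum_sig (addrC c) addrK hval kap_ww /G.
rewrite -hss; field.
by rewrite ?m_neq0 ?m1_neq0 ?m1'_neq0.
Qed.

Lemma cont_add (f h : 'rV[R]_n -> R) : continuous f -> continuous h ->
  continuous (fun y => f y + h y).
Proof.
move=> hf hh; rewrite (_ : (fun y => f y + h y) = f + h) //.
by move=> y; apply: continuousD; [exact: hf | exact: hh].
Qed.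

Lemma cont_Lf v : continuous (Lf v).
Proof.
rewrite /Lf /lam; apply: cont_sum => j; apply: cont_mul; first exact: cst_continuous.
apply: cont_add; first exact: cst_continuous.
apply: cont_mul; first exact: cst_continuous.
exact: cont_dot.
Qed.

Lemma proj_norm_eq (Mb : R) :
  (forall N : nat, (N <= n.+1)%N -> G R n `|m - 2 * N%:R| / m <= Mb) ->
  (exists kk : nat, (kk.*2 <= n.+1)%N /\ G R n (m - 2 * kk%:R) / m = Mb) ->
  proj_norm (cball c r) x = Mb.
Proof.
move=> H1 [kk [hkk H2]].
set B := cball c r.
have inB y : B y -> dot (y - c) (y - c) <= r ^+ 2.
  move=> hy; have h0 : 0 <= enorm (y - c) by rewrite /enorm sqrtr_ge0.
  by rewrite -enorm_sq ler_pXn2r ?nnegrE // ltW.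
have cB : B c.
  rewrite /B /cball /= subrr /enorm big1 ?sqrtr0 ?ltW // => i _.
  by rewrite mxE expr0n.
have xB j : B (x j) by rewrite /B /cball /= hxr.
have hcomp : compact B by apply: cball_compact; exact: ltW.
have sup_le (f : 'rV[R]_n -> R) b : (forall y, B y -> `|f y| <= b) -> supnorm B f <= b.
  move=> hb; apply: ge_sup; first by exists `|f c|, c.
  by move=> z [y hy <-]; apply: hb.
have le_sup (f : 'rV[R]_n -> R) y : (exists b, forall y, B y -> `|f y| <= b) -> B y ->
    `|f y| <= supnorm B f.
  move=> [b hb] hy; apply: ub_le_sup; last by exists y.
  by exists b => z [y' hy' <-]; apply: hb.
have upper p : (exists f : 'rV[R]_n -> R,
    {within B, continuous f} /\ supnorm B f <= 1 /\ interpolates x f p) ->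
    supnorm B p <= Mb.
  move=> [f [hf [hf1 [hpa hpx]]]].
  have hfb := cont_bounded hcomp hf.
  have hv j : `|f (x j)| <= 1 by apply: le_trans hf1; apply: le_sup => //.
  have hpL : forall y, p y = Lf (fun j => f (x j)) y.
    by apply: affine_unique => // [|j]; [exact: Lf_affine | rewrite Lf_node hpx].
  apply: sup_le => y hy; rewrite hpL; apply: Lf_bound => //; exact: inB.
pose tau := fun j : 'I_n.+1 => (kk <= j)%N.
pose v := sig tau.
pose f := fun y => Num.max (-1) (Num.min 1 (Lf v y)).
have hv1 j : `|v j| <= 1 by rewrite /v /sig; case: (tau j); rewrite ?normrN normr1.
have hLb : forall y, B y -> `|Lf v y| <= Mb.
  by move=> y hy; apply: Lf_bound => //; exact: inB.
have hmem : [set supnorm B p | p in [set p | exists f : 'rV[R]_n -> R,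
    {within B, continuous f} /\ supnorm B f <= 1 /\ interpolates x f p]] Mb.
  exists (Lf v).
    exists f; split.
      apply: continuous_subspaceT.
      rewrite (_ : f = (fun=> -1) \max ((fun=> 1) \min (Lf v))) //.
      move=> y; apply: continuous_max; first exact: cst_continuous.
      apply: continuous_min; first exact: cst_continuous.
      exact: cont_Lf.
    split.
      apply: sup_le => y _; rewrite ler_norml /f; apply/andP; split.
        by rewrite le_max lexx.
      by rewrite ge_max ge_min lexx /= andbT; lra.
    split; first exact: Lf_affine.
    move=> j; rewrite /f Lf_node /v /sig; case: (tau j).
      by rewrite minxx max_r //; lra.
    by rewrite min_r ?maxxx //; lra.
  apply/eqP; rewrite eq_le; apply/andP; split; first exact: sup_le.
  have [y [hy hLy]] := attain hkk.
  have hyB : B y.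
    rewrite /B /cball /= enormE.
    by rewrite -[X in _ <= X](ger0_norm (ltW hr)) -sqrtr_sqr ler_sqrt ?sqr_ge0.
  apply: le_trans (le_sup _ _ (ex_intro _ Mb hLb) hyB).
  rewrite -/tau -/v in hLy; rewrite hLy H2; exact: ler_norm.
rewrite /proj_norm; apply/eqP; rewrite eq_le; apply/andP; split.
  apply: ge_sup; first by exists Mb.
  by move=> z [p hp <-]; apply: upper.
apply: ub_le_sup => //.
by exists Mb => z [p hp <-]; apply: upper.
Qed.

End Geom.


Unset Implicit Arguments. Set Strict Implicit.

Theorem theorem11p2 (R : realType) (n : nat) (hn : (1 <= n)%N)
    (c : 'rV[R]_n) (r : R) (hr : 0 < r) (x : 'I_n.+1 -> 'rV[R]_n)
    (hx : regular_inscribed c r x) :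
  let N := proj_norm (cball c r) x in
  let a : int := Num.floor (n.+1%:R / 2 - Num.sqrt (n.+1%:R) / 2 : R) in
  N = Num.max (psi n (a%:~R)) (psi n ((a + 1)%:~R)) /\
  Num.sqrt (n%:R) <= N <= Num.sqrt (n.+1%:R) /\
  (N = Num.sqrt (n%:R) <-> n = 1%N) /\
  (N = Num.sqrt (n.+1%:R) <-> exists k : nat, Num.sqrt (n.+1%:R) = (k%:R : R)).
Proof.
move=> N a.
case: hx => hnd [hxr [del [hdel hdist]]].
have [k [ha [hk2 hkx]]] := floor_nat R n hn.
have ha' : a = k%:Z by exact: ha.
have hm : 0 < (n.+1%:R : R) by rewrite ltr0n.
have hmi : 0 <= (n.+1%:R : R)^-1 by rewrite invr_ge0 ltW.
have hN : N = Mx R n k.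
  apply: (proj_norm_eq hn hr hnd hxr hdel hdist).
    move=> j hj; rewrite /Mx; apply: ler_wpM2r => //.
    exact: (disc R n hn k hk2 hkx j hj).
  rewrite /Mx.
  have [h|h] := leP (G R n (n.+1%:R - 2 * k%:R)) (G R n (n.+1%:R - 2 * k.+1%:R)).
    exists k.+1; split; first by rewrite doubleS.
    by [].
  exists k; split; first by move: hk2; rewrite -!mul2n; lia.
  by [].
have hmax : Num.max (psi n (a%:~R)) (psi n ((a + 1)%:~R)) = Mx R n k.
  rewrite ha' (psi_a R n hn k hkx) (psi_a1 R n hn k hk2) /Mx.
  have [h|h] := leP (G R n (n.+1%:R - 2 * k%:R)) (G R n (n.+1%:R - 2 * k.+1%:R)).
    by rewrite !max_r // ler_wpM2r.
  by rewrite max_l //; apply: ler_wpM2r => //; exact: ltW.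
rewrite hmax hN.
split; first by [].
split; first by rewrite (M_ge R n hn k hk2 hkx) (M_le R n hn k hk2 hkx).
split; first by split; [exact: (M_sn R n hn k hk2 hkx) | exact: (M_one R n hn k hk2 hkx)].
exact: (M_sm R n hn k hk2 hkx).
Qed.
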